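(* Let $\mathcal{A}_l\subseteq\mathcal{A}$ be nonempty, $\alpha\in[0,1)$, and let $\pi^{(t)}\in\Delta(\mathcal{A}_l)$ be such that $(1-\alpha)V_{\pi^{(t)}}+\alpha V_{\pi_{\mathrm{off}}}$ is nonsingular. Let $\pi^{(t+1)}$ be obtained from $\pi^{(t)}$ by one Frank–Wolfe update as in the context. Then $$d(\pi^{(t+1)},\mathcal{A}_l,\alpha)-d(\pi^{(t)},\mathcal{A}_l,\alpha)\ge m(\delta(\pi^{(t)})),\qquad m(\delta):=\log(1+\delta)-\frac{\delta}{1+\delta}.$$
   Context: $\mathcal{A}\subset\mathbb{R}^d$ finite, spanning $\mathbb{R}^d$, with $d\ge2$; $\pi_{\mathrm{off}}\in\Delta(\mathcal{A})$; $V_\pi=\sum_a\pi(a)aa^\top$; $d(\pi,\mathcal{A}_l,\alpha)=\log\det(\alpha V_{\pi_{\mathrm{off}}}+(1-\alpha)V_\pi)$. For $\pi$ with $(1-\alpha)V_\pi+\alpha V_{\pi_{\mathrm{off}}}$ nonsingular let $H(\pi)=((1-\alpha)V_\pi+\alpha V_{\pi_{\mathrm{off}}})^{-1}$, $w_a=\mathrm{Tr}\big(H(\pi)((1-\alpha)aa^\top+\alpha V_{\pi_{\mathrm{off}}})\big)$ for $a\in\mathcal{A}_l$, $a_+\in\arg\max_{a\in\mathcal{A}_l}w_a$, and the slack $\delta(\pi)=\frac{w_{a_+}}{d}-1$. Frank–Wolfe update: with $w,a_+$ computed at $\pi^{(t)}$ and $\beta=\frac{w_{a_+}-d}{(d-1)w_{a_+}}$,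 $\pi^{(t+1)}=(1+\beta)^{-1}(\pi^{(t)}+\beta\mathbb{1}_{\{a_+\}})$. *)

(* Defs.v *)
From HB Require Import structures.
From mathcomp Require Import all_boot all_order all_algebra.
From mathcomp Require Import reals exp.
Set Implicit Arguments. Unset Strict Implicit. Unset Printing Implicit Defensive.
Import Order.TTheory GRing.Theory Num.Theory.
Local Open Scope ring_scope.

(* The finite action set A is encoded by a finite index type I and an
   injective map a : I -> 'cV[R]_d; distributions are functions I -> R. *)

Definition spans (R : realType) (d : nat) (I : finType) (a : I -> 'cV[R]_d) :=
  forall v : 'cV[R]_d, exists c : I -> R, v = \sum_i c i *: a i.

Definition is_distr_on (R : realType) (I : finType) (S : {set I}) (p : I -> R) :=
  (forall i, 0 <= p i) /\ (forall i, i \notin S -> p i = 0) /\ \sum_i p i = 1.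

Definition Vpi (R : realType) (d : nat) (I : finType) (a : I -> 'cV[R]_d)
  (p : I -> R) : 'M[R]_d := \sum_i p i *: (a i *m (a i)^T).

Definition Mmix (R : realType) (d : nat) (I : finType) (a : I -> 'cV[R]_d)
  (alpha : R) (poff p : I -> R) : 'M[R]_d :=
  alpha *: Vpi a poff + (1 - alpha) *: Vpi a p.

Definition dobj (R : realType) (d : nat) (I : finType) (a : I -> 'cV[R]_d)
  (alpha : R) (poff p : I -> R) : R := ln (\det (Mmix a alpha poff p)).

Definition wgt (R : realType) (d : nat) (I : finType) (a : I -> 'cV[R]_d)
  (alpha : R) (poff p : I -> R) (b : I) : R :=
  \tr (invmx (Mmix a alpha poff p) *m
       ((1 - alpha) *: (a b *m (a b)^T) + alpha *: Vpi a poff)).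

Definition slack (R : realType) (d : nat) (I : finType) (a : I -> 'cV[R]_d)
  (alpha : R) (poff p : I -> R) (aplus : I) : R :=
  wgt a alpha poff p aplus / d%:R - 1.

Definition fw_beta (R : realType) (d : nat) (I : finType) (a : I -> 'cV[R]_d)
  (alpha : R) (poff p : I -> R) (aplus : I) : R :=
  let w := wgt a alpha poff p aplus in (w - d%:R) / ((d%:R - 1) * w).

Definition fw_update (R : realType) (d : nat) (I : finType) (a : I -> 'cV[R]_d)
  (alpha : R) (poff p : I -> R) (aplus : I) : I -> R :=
  let beta := fw_beta a alpha poff p aplus in
  fun i => (p i + beta * (i == aplus)%:R) / (1 + beta).

Definition mfun (R : realType) (x : R) : R := ln (1 + x) - x / (1 + x).

(* Main.v *)
Require Import Defs.
From HB Require Import structures.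
From mathcomp Require Import all_boot all_order all_algebra.
From mathcomp Require Import reals exp.
Import Order.TTheory GRing.Theory Num.Theory.
Local Open Scope ring_scope.
From mathcomp Require Import ring lra.
Section S.
Variable R : realType.
Lemma det_rank1 n (u w : 'cV[R]_n) : \det (1%:M + u *m w^T) = 1 + (w^T *m u) 0 0.
Proof.
pose P := block_mx (1%:M : 'M[R]_n) (-u) w^T (1%:M : 'M_1).
have e1 : block_mx (1%:M : 'M[R]_n) 0 w^T (1%:M : 'M_1) *m block_mx 1%:M (-u) 0 (1%:M + w^T *m u) = P.
  rewrite mulmx_block /P ?mul1mx ?mulmx1 ?mul0mx ?mulmx0 ?addr0 ?add0r mulmxN.
  by rewrite addrCA addNr addr0.
have e2 : block_mx (1%:M + u *m w^T) (-u) 0 (1%:M : 'M_1) *m block_mx (1%:M : 'M[R]_n) 0 w^T (1%:M : 'M_1) = P.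
  rewrite mulmx_block /P ?mul1mx ?mulmx1 ?mul0mx ?mulmx0 ?addr0 ?add0r mulNmx.
  by rewrite addrK.
have := congr1 determinant e1; rewrite -e2 !det_mulmx !det_ublock !det_lblock !det1 !mul1r mulr1.
rewrite mulr1 => <-; by rewrite det_mx11 !mxE eqxx.
Qed.
End S.
Section Psd.
Variable R : realType.
Variable n : nat.
Implicit Types (G X : 'M[R]_n) (x y u v : 'cV[R]_n).
Definition qf G x y : R := (x^T *m G *m y) 0 0.
Definition psd G := G^T = G /\ forall x, 0 <= qf G x x.

Lemma mx11_mul (A : 'M[R]_(1,n)) (B : 'M[R]_(n,1)) (C : 'M[R]_(1,1)) :
  (A *m B *m C) = (A *m B) 0 0 *: C.
Proof. by rewrite {1}[A *m B]mx11_scalar mul_scalar_mx. Qed.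

Lemma qf_sym G x y : G^T = G -> qf G x y = qf G y x.
Proof.
move=> sG; rewrite /qf -[in LHS](trmxK (x^T *m G *m y)) mxE.
by rewrite !trmx_mul trmxK sG mulmxA.
Qed.

Lemma qfDr G x y z : qf G x (y + z) = qf G x y + qf G x z.
Proof. by rewrite /qf mulmxDr mxE. Qed.
Lemma qfZr G x y t : qf G x (t *: y) = t * qf G x y.
Proof. by rewrite /qf -scalemxAr mxE. Qed.
Lemma qfDl G x y z : qf G (y + z) x = qf G y x + qf G z x.
Proof. by rewrite /qf linearD /= !mulmxDl mxE. Qed.
Lemma qfZl G x y t : qf G (t *: y) x = t * qf G y x.
Proof. by rewrite /qf linearZ /= -!scalemxAl mxE. Qed.
Lemma qfDm G H x y : qf (G + H) x y = qf G x y + qf H x y.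
Proof. by rewrite /qf mulmxDr mulmxDl mxE. Qed.
Lemma qfZm G x y t : qf (t *: G) x y = t * qf G x y.
Proof. by rewrite /qf -scalemxAr -scalemxAl mxE. Qed.

Lemma CS G x y : psd G -> qf G x y ^+ 2 <= qf G x x * qf G y y.
Proof.
move=> [sG pG].
set a := qf G x x; set b := qf G x y; set c := qf G y y.
have h t : 0 <= a + 2 * t * b + t ^+ 2 * c.
  have := pG (x + t *: y).
  rewrite !qfDl !qfDr !qfZl !qfZr (qf_sym _ y x) //.
  rewrite -/a -/b -/c => H; apply: (le_trans H); rewrite le_eqVlt; apply/orP; left; apply/eqP.
  by rewrite expr2; ring.
have a0 : 0 <= a := pG x.
have c0 : 0 <= c := pG y.
have [cpos|cle] := ltP 0 c; last first.
  have c0' : c = 0 by apply/le_anti; rewrite cle c0.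
  rewrite c0' mulr0.
  case: (eqVneq b 0) => [->|bn]; first by rewrite expr0n.
  have := h (- (a + 1) / (2 * b)).
  have E : a + 2 * (- (a + 1) / (2 * b)) * b + (- (a + 1) / (2 * b)) ^+ 2 * c = -1.
    rewrite c0' mulr0 addr0; field; by rewrite bn.
  by rewrite E ler0N1.
have := h (- b / c).
have cn : c != 0 by rewrite gt_eqF.
move=> H.
have E : a + 2 * (- b / c) * b + (- b / c) ^+ 2 * c = (a * c - b ^+ 2) / c.
  by field.
rewrite E in H.
by move: (mulr_ge0 H c0); rewrite divfK // subr_ge0.
Qed.

Lemma qf0m x y : qf 0 x y = 0.
Proof. by rewrite /qf mulmx0 mul0mx mxE. Qed.

Lemma psd0 : psd 0.
Proof. by split; [rewrite trmx0 | move=> x; rewrite qf0m]. Qed.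

Lemma psdD G H : psd G -> psd H -> psd (G + H).
Proof.
move=> [sG pG] [sH pH]; split; first by rewrite linearD /= sG sH.
by move=> x; rewrite qfDm addr_ge0.
Qed.

Lemma psdZ t G : 0 <= t -> psd G -> psd (t *: G).
Proof.
move=> t0 [sG pG]; split; first by rewrite linearZ /= sG.
by move=> x; rewrite qfZm mulr_ge0.
Qed.

Lemma qf_rank1 v x y : qf (v *m v^T) x y = (x^T *m v) 0 0 * (v^T *m y) 0 0.
Proof. by rewrite /qf mulmxA -(mulmxA _ v^T) {1}[x^T *m v]mx11_scalar mul_scalar_mx mxE. Qed.

Lemma trv x v : (x^T *m v) 0 0 = (v^T *m x) 0 0.
Proof. by rewrite -[in LHS](trmxK (x^T *m v)) mxE trmx_mul trmxK. Qed.

Lemma psd_rank1 v : psd (v *m v^T).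
Proof.
split; first by rewrite trmx_mul trmxK.
by move=> x; rewrite qf_rank1 trv -expr2 sqr_ge0.
Qed.

Lemma psd1 : psd 1%:M.
Proof.
split; first by rewrite trmx1.
move=> x; rewrite /qf mulmx1 mxE; apply: sumr_ge0 => i _.
by rewrite mxE -expr2 sqr_ge0.
Qed.

Lemma psd_inv G : psd G -> G \in unitmx -> psd (invmx G).
Proof.
move=> [sG pG] uG; split; first by rewrite trmx_inv sG.
move=> x; have := pG (invmx G *m x).
rewrite /qf trmx_mul trmx_inv sG -!mulmxA (mulmxA G) mulmxV // mul1mx.
by rewrite mulmxA.
Qed.

Lemma psd_sum (s : seq (R * 'cV[R]_n)) :
  all (fun j => 0 <= j.1) s -> psd (\sum_(j <- s) j.1 *: (j.2 *m j.2^T)).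
Proof.
elim: s => [|[c v] s IH] /=; first by rewrite big_nil => _; exact: psd0.
by move=> /andP[c0 /IH h]; rewrite big_cons; apply: psdD => //; apply: psdZ => //; apply: psd_rank1.
Qed.

Lemma upd_det X c v : X \in unitmx ->
  \det (X + c *: (v *m v^T)) = \det X * (1 + c * qf (invmx X) v v).
Proof.
move=> uX.
have -> : X + c *: (v *m v^T) = X *m (1%:M + (c *: (invmx X *m v)) *m v^T).
  rewrite mulmxDr mulmx1 -!scalemxAl -scalemxAr !mulmxA mulmxV // mul1mx.
  done.
rewrite det_mulmx det_rank1 -scalemxAr mxE /qf mulmxA.
done.
Qed.

Lemma upd_inv X c v : X \in unitmx -> 0 <= c -> 0 <= qf (invmx X) v v ->
  invmx (X + c *: (v *m v^T)) = invmx X -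
     (c / (1 + c * qf (invmx X) v v)) *: (invmx X *m v *m v^T *m invmx X).
Proof.
move=> uX c0 k0.
set G := invmx X; set k := qf G v v; set e := c / (1 + c * k).
set Y := G - e *: (G *m v *m v^T *m G).
set P := v *m v^T *m G.
have k1 : 1 + c * k != 0 by rewrite gt_eqF // ltr_pwDl // mulr_ge0.
have XG : X *m G = 1%:M by rewrite mulmxV.
have h1 : X *m (G *m v *m v^T *m G) = P by rewrite !mulmxA XG mul1mx.
have h2 : (v *m v^T) *m (G *m v *m v^T *m G) = k *: P.
  have hv : v *m v^T *m G *m v = k *: v.
    by rewrite -!mulmxA (mulmxA v^T) [v^T *m G *m v]mx11_scalar mul_mx_scalar.
  by rewrite /P !mulmxA hv -!scalemxAl.
have XY : (X + c *: (v *m v^T)) *m Y = 1%:M.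
  rewrite /Y mulmxDl !mulmxBr -!scalemxAr -!scalemxAl XG h1 h2 scalerA.
  have ce : c - e * c * k = e by rewrite /e; field.
  by rewrite scalerA -scalerBl ce subrK.
have uX' : (X + c *: (v *m v^T)) \in unitmx.
  by rewrite unitmxE upd_det // unitrM -unitmxE uX unitfE k1.
by rewrite -[RHS](mulKmx uX' Y) XY mulmx1.
Qed.

Lemma adj_mono X c v u : psd X -> X \in unitmx -> 0 <= c -> 0 <= \det X ->
  \det X * qf (invmx X) u u <=
  \det (X + c *: (v *m v^T)) * qf (invmx (X + c *: (v *m v^T))) u u.
Proof.
move=> pX uX c0 d0.
have pG := psd_inv X pX uX.
have [sG qG] := pG.
set G := invmx X in pG sG qG *.
have k0 : 0 <= qf G v v := qG v.
rewrite upd_det // upd_inv // -/G.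
set k := qf G v v.
have k1 : 1 + c * k != 0 by rewrite gt_eqF // ltr_pwDl // mulr_ge0.
have W : G *m v *m v^T *m G = (G *m v) *m (G *m v)^T.
  by rewrite trmx_mul sG !mulmxA.
rewrite W qfDm -scaleNr qfZm qf_rank1.
have E : (u^T *m (G *m v)) 0 0 = qf G u v by rewrite /qf mulmxA.
rewrite E trv E.
have CSb := CS G u v pG.
rewrite -/k in CSb.
set b := qf G u v in CSb *; set q := qf G u u in CSb *.
have -> : \det X * (1 + c * k) * (q + - (c / (1 + c * k)) * (b * b)) =
          \det X * (q + c * (q * k - b ^+ 2)).
  by field.
rewrite ler_wpM2l // lerDl mulr_ge0 // subr_ge0 //.
Qed.

Lemma chain (s : seq (R * 'cV[R]_n)) X : psd X -> X \in unitmx -> 0 < \det X ->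
  all (fun j => 0 <= j.1) s ->
  \det X * (1 + \sum_(j <- s) j.1 * qf (invmx X) j.2 j.2) <=
  \det (X + \sum_(j <- s) j.1 *: (j.2 *m j.2^T)).
Proof.
elim: s X => [|[c v] s IH] X pX uX dX /=.
  by rewrite !big_nil addr0 mulr1 addr0.
move=> /andP[/= c0 hs].
set X' := X + c *: (v *m v^T).
have [sG qG] := psd_inv X pX uX.
have k0 : 0 <= qf (invmx X) v v := qG v.
have pX' : psd X' by apply: psdD => //; apply: psdZ => //; apply: psd_rank1.
have dX' : \det X' = \det X * (1 + c * qf (invmx X) v v) by rewrite upd_det.
have dX'0 : 0 < \det X' by rewrite dX' mulr_gt0 // ltr_pwDl // mulr_ge0.
have uX' : X' \in unitmx by rewrite unitmxE unitfE gt_eqF.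
have := IH X' pX' uX' dX'0 hs.
rewrite !big_cons /= !addrA -/X' => H; apply: (le_trans _ H).
rewrite mulrDr [in leRHS]mulrDr mulr1 -dX' !big_distrr /=.
rewrite lerD2l !big_seq; apply: ler_sum => j js.
have cj : 0 <= j.1 by move/allP: hs => /(_ j js).
rewrite mulrCA [in leRHS]mulrCA ler_wpM2l //.
by apply: adj_mono => //; apply: ltW.
Qed.

Lemma char_horner (A : 'M[R]_n) t : (char_poly A).[t] = \det (t%:M - A).
Proof.
rewrite /char_poly -[LHS]/(horner_eval t _) -det_map_mx; congr (\det _).
apply/matrixP => i j; rewrite !mxE /horner_eval.
by case: (i == j); rewrite ?mulr1n ?mulr0n /= ?rmorphB /= ?horner_evalE ?hornerE ?rmorph0.
Qed.

Lemma det_sum_pos (s : seq (R * 'cV[R]_n)) :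
  all (fun j => 0 <= j.1) s ->
  (\sum_(j <- s) j.1 *: (j.2 *m j.2^T)) \in unitmx ->
  0 < \det (\sum_(j <- s) j.1 *: (j.2 *m j.2^T)).
Proof.
set S := \sum_(j <- s) _ => hs uS.
have pos t : 0 < t -> 0 < \det (t%:M + S).
  move=> t0.
  have pX : psd (t%:M) by rewrite -scalemx1; apply: psdZ; [exact: ltW | exact: psd1].
  have dX : 0 < \det (t%:M : 'M[R]_n) by rewrite det_scalar exprn_gt0.
  have uX : (t%:M : 'M[R]_n) \in unitmx by rewrite unitmxE unitfE gt_eqF.
  have := chain s _ pX uX dX hs; rewrite -/S => H; apply: lt_le_trans H.
  rewrite mulr_gt0 // ltr_pwDl // big_seq sumr_ge0 // => j js.
  have [_ qG] := psd_inv _ pX uX.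
  by rewrite mulr_ge0 //; move/allP: hs => /(_ j js).
set p := char_poly (- S).
have hp t : p.[t] = \det (t%:M + S) by rewrite /p char_horner opprK.
have p0 : p.[0] = \det S by rewrite hp raddf0 add0r.
have dS : \det S != 0 by rewrite -unitfE -unitmxE.
have [//|dle] := ltP 0 (\det S).
have dlt : \det S < 0 by rewrite lt_neqAle dS dle.
have [x /andP[x0 x1] rx] : exists2 x, 0 <= x <= 1 & root p x.
  apply: poly_ivt; first exact: ler01.
  by rewrite p0 (ltW dlt) /= hp ltW // pos.
move: rx; rewrite /root; case: (eqVneq x 0) => [->|xn].
  by rewrite p0 (negbTE dS).
by rewrite hp gt_eqF // pos // lt_neqAle eq_sym xn x0.
Qed.

Lemma tr_rank1 G v : \tr (G *m (v *m v^T)) = qf G v v.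
Proof. by rewrite mulmxA mxtrace_mulC /mxtrace big_ord1 /qf mulmxA. Qed.
End Psd.

Section Real.
Variable R : realType.
Lemma e2_gen (dR w : R) : 0 < dR - 1 -> 0 < w -> dR != 0 ->
  1 + (w - dR) / ((dR - 1) * w) * w = w / dR * (1 + (w - dR) / ((dR - 1) * w)).
Proof. by move=> h1 h2 h3; field; rewrite h3 !gt_eqF. Qed.
Lemma e3_gen (dR w : R) : 0 < dR - 1 -> 0 < w -> dR != 0 ->
  (w / dR - 1) / (w / dR) = (dR - 1) * ((w - dR) / ((dR - 1) * w)).
Proof. by move=> h1 h2 h3; field; rewrite h3 !gt_eqF. Qed.
End Real.
Arguments qf {R n}.
Arguments psd {R n}.
Arguments tr_rank1 {R n}.
Arguments chain {R n}.
Arguments det_sum_pos {R n}.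
Arguments psd_sum {R n}.

Theorem lemma5p4 (R : realType) (d : nat) (I : finType) (a : I -> 'cV[R]_d)
  (poff : I -> R) (Al : {set I}) (alpha : R) (p : I -> R) (aplus : I) :
  (2 <= d)%N ->
  injective a ->
  spans a ->
  is_distr_on [set: I] poff ->
  Al != set0 ->
  0 <= alpha -> alpha < 1 ->
  is_distr_on Al p ->
  Mmix a alpha poff p \in unitmx ->
  aplus \in Al ->
  (forall b, b \in Al -> wgt a alpha poff p b <= wgt a alpha poff p aplus) ->
  dobj a alpha poff (fw_update a alpha poff p aplus) - dobj a alpha poff p
    >= mfun (slack a alpha poff p aplus).
Proof.
move=> d2 _ _ [poff0 [_ poff1]] _ a0 a1 [p0 [pAl p1]] uM aAl wmax.
set M := Mmix a alpha poff p.
set H := invmx M.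
set w := wgt a alpha poff p aplus.
set X := fun i => a i *m (a i)^T.
have Mmix_sum q : Mmix a alpha poff q = \sum_i (alpha * poff i + (1 - alpha) * q i) *: X i.
  rewrite /Mmix /Vpi !scaler_sumr -big_split /=; apply: eq_bigr => i _.
  by rewrite !scalerA scalerDl.
have trV q : \tr (H *m Vpi a q) = \sum_i q i * qf H (a i) (a i).
  rewrite /Vpi mulmx_sumr (big_morph _ (@mxtraceD _ _) (@mxtrace0 _ _)); apply: eq_bigr => i _.
  by rewrite -scalemxAr mxtraceZ tr_rank1.
set T := \tr (H *m Vpi a poff).
have wb b : wgt a alpha poff p b = (1 - alpha) * qf H (a b) (a b) + alpha * T.
  by rewrite /wgt -/M -/H mulmxDr mxtraceD -!scalemxAr !linearZ /= tr_rank1.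
have trHM : \tr (H *m M) = d%:R by rewrite mulVmx // mxtrace1.
have dsum : \sum_i p i * wgt a alpha poff p i = d%:R.
  rewrite -trHM /M /Mmix mulmxDr mxtraceD -!scalemxAr !linearZ /= trV -/T.
  rewrite (eq_bigr (fun i => (1-alpha) * (p i * qf H (a i) (a i)) + p i * (alpha * T))); last first.
    by move=> i _; rewrite wb; ring.
  by rewrite big_split /= -big_distrr /= -big_distrl /= p1 mul1r /T !trV addrC.
have wd : d%:R <= w.
  rewrite -dsum; apply: (@le_trans _ _ (\sum_i p i * w)).
    apply: ler_sum => i _.
    case: (boolP (i \in Al)) => iA; first by rewrite ler_wpM2l // wmax.
    by rewrite pAl // !mul0r.
  by rewrite -big_distrl /= p1 mul1r.
have d2R : 2 <= d%:R :> R by rewrite (ler_nat R 2 d).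
have d1 : 0 < d%:R - 1 :> R by rewrite subr_gt0 (lt_le_trans _ d2R) // ltr1n.
have wpos : 0 < w by apply: lt_le_trans wd; apply: lt_le_trans d2R.
set beta := fw_beta a alpha poff p aplus.
have beq : beta = (w - d%:R) / ((d%:R - 1) * w) by [].
have b0 : 0 <= beta by rewrite beq divr_ge0 // ?subr_ge0 // mulr_ge0 // ltW.
have B0 : 0 < 1 + beta by rewrite ltr_pwDl.
have B1 : 1 + beta != 0 by rewrite gt_eqF.
set s0 := [seq (alpha * poff i + (1 - alpha) * p i, a i) | i <- enum I].
have s0E : \sum_(j <- s0) j.1 *: (j.2 *m j.2^T) = M by rewrite /M Mmix_sum big_map big_enum.
have hs0 : all (fun j => 0 <= j.1) s0.
  by apply/allP => j /mapP [i _ ->] /=; rewrite addr_ge0 // mulr_ge0 // subr_ge0 ltW.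
have psdM : psd M by rewrite -s0E; apply: psd_sum.
have detM : 0 < \det M by rewrite -s0E; apply: det_sum_pos => //; rewrite s0E.
set sN := (beta * (1 - alpha), a aplus) :: [seq (beta * (alpha * poff i), a i) | i <- enum I].
have hsN : all (fun j => 0 <= j.1) sN.
  apply/andP; split; first by rewrite /= mulr_ge0 // subr_ge0 ltW.
  by apply/allP => j /mapP [i _ ->] /=; apply: mulr_ge0 => //; apply: mulr_ge0.
have chainN := chain sN M psdM uM detM hsN.
have sumNq : \sum_(j <- sN) j.1 * qf H j.2 j.2 = beta * w.
  rewrite big_cons big_map big_enum /= /w wb /T trV [RHS]mulrDr; congr (_ + _); first by ring.
  rewrite !big_distrr /=; apply: eq_big => [i|i _]; first by rewrite inE.
  ring.
set p' := fw_update a alpha poff p aplus.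
have sumNM : M + \sum_(j <- sN) j.1 *: (j.2 *m j.2^T) = (1 + beta) *: Mmix a alpha poff p'.
  rewrite big_cons big_map /M !Mmix_sum scaler_sumr /=.
  rewrite [RHS](eq_bigr (fun i => ((alpha * poff i + (1 - alpha) * p i) *: X i + (beta * (alpha * poff i)) *: X i)
     + (beta * (1 - alpha) * (i == aplus)%:R) *: X i)); last first.
    move=> i _; rewrite scalerA -!scalerDl; congr (_ *: _).
    by rewrite /p' /fw_update -/beta; field.
  rewrite big_enum /= !big_split /=.
  have E3 : \sum_i (beta * (1 - alpha) * (i == aplus)%:R) *: X i = (beta * (1 - alpha)) *: X aplus.
    rewrite (bigD1 aplus) //= eqxx mulr1 big1 ?addr0 // => i ne.
    by rewrite (negbTE ne) mulr0 scale0r.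
  have E4 : \sum_(i in I) (beta * (alpha * poff i)) *: (a i *m (a i)^T) = \sum_i (beta * (alpha * poff i)) *: X i.
    by apply: eq_bigl => i; rewrite inE.
  by rewrite E3 E4 [RHS]addrAC addrA.
rewrite sumNq sumNM detZ in chainN.
set E := \det (Mmix a alpha poff p') in chainN.
set D := \det M in chainN detM.
have Bd : 0 < (1 + beta) ^+ d by rewrite exprn_gt0.
have bw : 0 < 1 + beta * w by rewrite ltr_pwDl // mulr_ge0 // ltW.
have Epos : 0 < E.
  have : 0 < (1 + beta) ^+ d * E by apply: lt_le_trans chainN; rewrite mulr_gt0.
  by rewrite pmulr_rgt0.
have L : ln (D * (1 + beta * w)) <= ln ((1 + beta) ^+ d * E).
  by rewrite ler_ln // posrE mulr_gt0.
rewrite !lnM ?posrE // lnXn // in L.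
have dR0 : d%:R != 0 :> R by rewrite gt_eqF // (lt_le_trans _ d2R).
have e2 := e2_gen _ _ _ d1 wpos dR0; rewrite -beq in e2.
have wdpos : 0 < w / d%:R by rewrite divr_gt0 // (lt_le_trans _ d2R).
rewrite e2 lnM ?posrE // in L.
rewrite /dobj -/M -/D -/E /mfun /slack -/w.
have e1 : 1 + (w / d%:R - 1) = w / d%:R by rewrite addrC subrK.
rewrite e1.
have lB : ln (1 + beta) <= beta by apply: le_ln1Dx; apply: lt_le_trans b0; rewrite ltrN10.
have e3 := e3_gen _ _ _ d1 wpos dR0; rewrite -beq in e3.
rewrite e3.
have H2 : (d%:R - 1) * ln (1 + beta) <= (d%:R - 1) * beta by rewrite ler_wpM2l // ltW.
rewrite -[ln (1 + beta) *+ d]mulr_natr in L.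
have H3 : ln (1 + beta) * d%:R - ln (1 + beta) <= (d%:R - 1) * beta.
  by apply: le_trans H2; rewrite mulrBl mul1r mulrC.
move: L H3; set lD := ln D; set lE := ln E; set lC := ln (w / d%:R).
set lnB := ln (1 + beta); set P := lnB * d%:R; set Q := (d%:R - 1) * beta.
move=> L H3; lra.
Qed.
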